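(* Among the grid graphs $P_m \Box P_n$ with $2 \leq m \leq n$, the only diametrical one is $P_2 \Box P_2$.
   Context: $P_k$ is the path on $k$ vertices and $\Box$ the Cartesian product of graphs. Let $G=(V,E)$ be a finite connected graph with distance $d(u,v)$, eccentricity $e(v)=\max_w d(v,w)$ and diameter $\mathrm{diam}(G)=\max_v e(v)$. A broadcast is a function $f: V\to\{0,\dots,\mathrm{diam}(G)\}$ with $f(v)\le e(v)$; its cost is $\sum_v f(v)$; it is dominating if every $u$ has some $v$ with $f(v)\ge 1$ and $d(u,v)\le f(v)$; a dominating broadcast is minimal if decreasing $f(v)$ for any $v$ with $f(v)>0$ destroys domination. $\Gamma_b(G)$ is the maximum cost of a minimal dominating broadcast, and $G$ is called diametrical if $\Gamma_b(G)=\mathrm{diam}(G)$. *)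

(* Defs.v *)
From mathcomp Require Import all_boot.
Set Implicit Arguments. Unset Strict Implicit. Unset Printing Implicit Defensive.

Section Graphs.
Variables (T : finType) (e : rel T).

Fixpoint ball (k : nat) (u : T) : {set T} :=
  match k with
  | 0 => [set u]
  | k'.+1 => ball k' u :|: [set y | [exists x in ball k' u, e x y]]
  end.

(* graph distance: least k with v in ball k u (distances in a connected
   graph on #|T| vertices are < #|T|; value #|T| if unreachable) *)
Definition dist (u v : T) : nat := find (fun k => v \in ball k u) (iota 0 #|T|).

Definition ecc (v : T) : nat := \max_(w : T) dist v w.
Definition diam : nat := \max_(v : T) ecc v.

Definition connected_graph : Prop := forall u v : T, connect e u v.

Definition is_broadcast (f : T -> nat) : bool :=
  [forall v, (f v <= diam) && (f v <= ecc v)].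

Definition bcost (f : T -> nat) : nat := \sum_(v : T) f v.

Definition dominating (f : T -> nat) : bool :=
  [forall u, [exists v, (0 < f v) && (dist u v <= f v)]].

Definition bupd (f : T -> nat) (v : T) (k : nat) : T -> nat :=
  fun w => if w == v then k else f w.

Definition minimal_dominating (f : T -> nat) : bool :=
  is_broadcast f && dominating f &&
  [forall v, [forall k : 'I_diam.+1,
     (0 < f v) && (k < f v) ==> ~~ dominating (bupd f v k)]].

Definition Gamma_b : nat :=
  \max_(f : {ffun T -> 'I_diam.+1} | minimal_dominating (fun v => val (f v)))
     bcost (fun v => val (f v)).

Definition diametrical : Prop := Gamma_b = diam.

End Graphs.

Definition path_rel (k : nat) : rel 'I_k := fun i j => (i.+1 == j) || (j.+1 == i).

Definition cart_rel (A B : finType) (eA : rel A) (eB : rel B) : rel (A * B)%type :=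
  fun x y => ((x.1 == y.1) && eB x.2 y.2) || ((x.2 == y.2) && eA x.1 y.1).

Definition grid (m n : nat) : rel ('I_m * 'I_n)%type :=
  cart_rel (@path_rel m) (@path_rel n).
Arguments grid : clear implicits.
Arguments path_rel : clear implicits.

(* Main.v *)
Require Import Defs.
From mathcomp Require Import all_boot zify.
From Stdlib Require Import FunctionalExtensionality.
Set Implicit Arguments. Unset Strict Implicit. Unset Printing Implicit Defensive.

Definition adist (a b : nat) := (a - b) + (b - a).
Definition md {m n} (u v : 'I_m * 'I_n) : nat := adist u.1 v.1 + adist u.2 v.2.

Lemma edge_md m n (x y : 'I_m * 'I_n) : grid m n x y -> md x y = 1.
Proof.
case: x y => [a b] [c d]; rewrite /grid /cart_rel /path_rel /md /adist /=.
case/orP => /andP [/eqP E /orP [/eqP H|/eqP H]]; rewrite ?E; lia.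
Qed.

Lemma md_tri m n (u x v : 'I_m * 'I_n) : md u v <= md u x + md x v.
Proof. rewrite /md /adist; lia. Qed.

Lemma step_ord m (a b : 'I_m) : a != b ->
  exists c : 'I_m, path_rel m c b /\ (adist a c).+1 = adist a b.
Proof.
move=> /eqP Hab.
case: (ltngtP a b) => H.
- have Hc : b.-1 < m by have := ltn_ord b; lia.
  exists (Ordinal Hc); rewrite /path_rel /adist /=; split; first (apply/orP; left; apply/eqP); lia.
- have Hc : b.+1 < m by have := ltn_ord a; lia.
  exists (Ordinal Hc); rewrite /path_rel /adist /=; split; first (apply/orP; right; apply/eqP); lia.
- by exfalso; apply: Hab; apply: val_inj.
Qed.

Lemma step_pair m n (u v : 'I_m * 'I_n) : u != v ->
  exists x, grid m n x v /\ (md u x).+1 = md u v.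
Proof.
case: u v => [a b] [c d] Huv.
case: (eqVneq a c) => [Eac|Nac].
- subst c.
  have Nbd : b != d by apply: contra Huv => /eqP ->.
  have [c' [H1 H2]] := step_ord Nbd.
  exists (a, c'); rewrite /grid /cart_rel /= eqxx H1 /=; split => //.
  rewrite /md /= -H2; lia.
- have [c' [H1 H2]] := step_ord Nac.
  exists (c', d); rewrite /grid /cart_rel /= eqxx H1 orbT; split => //.
  rewrite /md /= -H2; lia.
Qed.

Lemma ball_grid m n k (u v : 'I_m * 'I_n) :
  (v \in ball (grid m n) k u) = (md u v <= k).
Proof.
elim: k v => [|k IH] v /=.
- rewrite in_set1; case: u v => [a b] [c d]; rewrite /md /adist /= xpair_eqE.
  apply/idP/idP => [/andP [/eqP H1 /eqP H2]|H]; first by subst; lia.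
  apply/andP; split; apply/eqP; apply: val_inj => /=; lia.
- rewrite in_setU in_set IH; apply/idP/idP.
  + case/orP => [H|/existsP [x /andP [Hx Hxv]]]; first lia.
    rewrite IH in Hx; have := edge_md Hxv; have := md_tri u x v; lia.
  + move=> H; case: (leqP (md u v) k) => H2; first by [].
    have Huv : u != v by apply/negP => /eqP E; subst; move: H2; rewrite /md /adist; lia.
    have [x [Hx1 Hx2]] := step_pair Huv.
    apply/orP; right; apply/existsP; exists x; rewrite IH Hx1 andbT; lia.
Qed.

Lemma find_iota_le d N : d < N -> find (fun k => d <= k) (iota 0 N) = d.
Proof.
move=> H; rewrite -(subnKC (ltnW H)) iotaD find_cat.
have -> : has (fun k => d <= k) (iota 0 d) = false.
  by apply/negbTE/hasPn => x; rewrite mem_iota; lia.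
rewrite size_iota add0n; case E: (N - d) => [|r]; first lia.
by rewrite /= leqnn addn0.
Qed.

Lemma dist_grid m n (u v : 'I_m * 'I_n) : dist (grid m n) u v = md u v.
Proof.
rewrite /dist (@eq_find _ _ (fun k => md u v <= k)); last by move=> k; rewrite ball_grid.
apply: find_iota_le; rewrite card_prod !card_ord.
case: u v => [a b] [c d]; rewrite /md /adist /=.
have := ltn_ord a; have := ltn_ord b; have := ltn_ord c; have := ltn_ord d. nia.
Qed.

Lemma md_le m n (u v : 'I_m * 'I_n) : md u v <= m.-1 + n.-1.
Proof.
case: u v => [a b] [c d]; rewrite /md /adist /=.
have := ltn_ord a; have := ltn_ord b; have := ltn_ord c; have := ltn_ord d. lia.
Qed.

Lemma diam_grid m n : 0 < m -> 0 < n -> diam (grid m n) = m.-1 + n.-1.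
Proof.
move=> Hm Hn; apply/eqP; rewrite eqn_leq; apply/andP; split.
- apply/bigmax_leqP => v _; apply/bigmax_leqP => w _; rewrite dist_grid; exact: md_le.
- have H1 : m.-1 < m by lia.
  have H2 : n.-1 < n by lia.
  apply: (bigmax_sup (Ordinal Hm, Ordinal Hn)) => //.
  apply: (bigmax_sup (Ordinal H1, Ordinal H2)) => //.
  rewrite dist_grid /md /adist /=; lia.
Qed.

Lemma gamma_lb m n : 2 <= m -> 2 <= n -> m + 2 * n - 4 <= Gamma_b (grid m n).
Proof.
move=> Hm Hn.
have Hm0 : 0 < m by lia.
have Hn0 : 0 < n by lia.
have Hm1 : m.-1 < m by lia.
have Hn1 : n.-1 < n by lia.
have Hm2 : 1 < m by lia.
have HD := diam_grid Hm0 Hn0.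
pose c1 : 'I_m * 'I_n := (Ordinal Hm0, Ordinal Hn0).
pose c2 : 'I_m * 'I_n := (Ordinal Hm1, Ordinal Hn0).
have Hc21 : c2 != c1.
  by apply/negP => /eqP/(congr1 (fun x => nat_of_ord x.1)) /=; lia.
pose g (v : 'I_m * 'I_n) := if v == c1 then n.-1 else if v == c2 then m + n - 3 else 0.
have g1 : g c1 = n.-1 by rewrite /g eqxx.
have g2 : g c2 = m + n - 3 by rewrite /g (negbTE Hc21) eqxx.
have g3 : forall v, v != c1 -> v != c2 -> g v = 0.
  by move=> v h1 h2; rewrite /g (negbTE h1) (negbTE h2).
have gle : forall v, g v <= diam (grid m n).
  by move=> v; rewrite HD /g; case: ifP => _; [|case: ifP => _]; lia.
pose f : {ffun 'I_m * 'I_n -> 'I_(diam (grid m n)).+1} := [ffun v => inord (g v)].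
have fg : (fun v => nat_of_ord (f v)) = g.
  by apply: functional_extensionality => v; rewrite ffunE inordK // ltnS.
have Hmin : minimal_dominating (grid m n) g.
  rewrite /minimal_dominating; apply/andP; split; first (apply/andP; split).
  - apply/forallP => v; rewrite gle /=.
    case: (eqVneq v c1) => [->|h1]; first rewrite g1.
      apply: (bigmax_sup (Ordinal Hm1, Ordinal Hn1)) => //.
      by rewrite dist_grid /md /adist /=; lia.
    case: (eqVneq v c2) => [->|h2]; last by rewrite g3.
    rewrite g2; apply: (bigmax_sup (Ordinal Hm0, Ordinal Hn1)) => //.
    by rewrite dist_grid /md /adist /=; lia.
  - apply/forallP => [[i j]]; apply/existsP.
    case: (leqP (i + j) n.-1) => Hij.
      by exists c1; rewrite g1 dist_grid /md /adist /=; apply/andP; split; lia.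
    exists c2; rewrite g2 dist_grid /md /adist /=; apply/andP; split; first lia.
    have := ltn_ord i; have := ltn_ord j; lia.
  - apply/forallP => v; apply/forallP => k; apply/implyP => /andP [Hpos Hk].
    rewrite /dominating negb_forall; apply/existsP.
    case: (eqVneq v c1) => [Ev|h1].
      subst v; rewrite g1 in Hk.
      exists (Ordinal Hm0, Ordinal Hn1); rewrite negb_exists; apply/forallP => w.
      apply/negP => /andP [H1 H2]; move: H1 H2; rewrite /bupd dist_grid.
      case: (eqVneq w c1) => [->|hw1]; first by rewrite /md /adist /=; lia.
      case: (eqVneq w c2) => [->|hw2]; first by rewrite g2 /md /adist /=; lia.
      by rewrite g3.
    case: (eqVneq v c2) => [Ev|h2]; last by rewrite g3 in Hpos.
    subst v; rewrite g2 in Hk.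
    exists (Ordinal Hm2, Ordinal Hn1); rewrite negb_exists; apply/forallP => w.
    apply/negP => /andP [H1 H2]; move: H1 H2; rewrite /bupd dist_grid.
    case: (eqVneq w c2) => [->|hw2]; first by rewrite /md /adist /=; lia.
    case: (eqVneq w c1) => [->|hw1]; first by rewrite g1 /md /adist /=; lia.
    by rewrite g3.
have Hcost : bcost g = n.-1 + (m + n - 3).
  rewrite /bcost (bigD1 c1) // (bigD1 c2) //= g1 g2 big1 ?addn0 //.
  by move=> v /andP [h2 h1]; rewrite g3.
apply: (@leq_trans (bcost g)); first by rewrite Hcost; lia.
rewrite /Gamma_b -fg; apply: (@leq_bigmax_cond _ _ _ f).
by rewrite fg.
Qed.

Lemma notmin (T : finType) (e : rel T) (f : T -> nat) w :
  0 < f w -> dominating e (bupd f w 0) -> ~~ minimal_dominating e f.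
Proof.
move=> Hpos Hd; rewrite /minimal_dominating; apply/negP => /andP [_ /forallP H].
by move: (H w) => /forallP /(_ ord0); rewrite Hpos /= Hd.
Qed.

Lemma neq22 (p q : 'I_2 * 'I_2) : ((p.1 : nat) != q.1) || ((p.2 : nat) != q.2) -> p != q.
Proof. by apply: contraL => /eqP ->; rewrite !eqxx. Qed.

Lemma rm3 (f : 'I_2 * 'I_2 -> nat) (p q w : 'I_2 * 'I_2) :
  (p.1 : nat) + q.1 = 1 -> (p.2 : nat) + q.2 = 1 ->
  0 < f p -> 0 < f q -> w != p -> w != q -> 0 < f w ->
  ~~ minimal_dominating (grid 2 2) f.
Proof.
move=> E1 E2 Hp Hq Hwp Hwq Hw; apply: (notmin Hw).
apply/forallP => u; apply/existsP.
case: (leqP (md u p) 1) => Hu.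
  by exists p; rewrite /bupd eq_sym (negbTE Hwp) Hp dist_grid /=; lia.
exists q; rewrite /bupd eq_sym (negbTE Hwq) Hq dist_grid /=.
move: Hu; case: u p q E1 E2 {Hwp Hwq Hp Hq} => [a b] [c d] [c' d'] /=.
rewrite /md /adist /=.
have := ltn_ord a; have := ltn_ord b; have := ltn_ord c; have := ltn_ord d.
have := ltn_ord c'; have := ltn_ord d'. lia.
Qed.

Lemma gamma_ub22 : Gamma_b (grid 2 2) <= 2.
Proof.
have HD : diam (grid 2 2) = 2 by rewrite diam_grid.
rewrite /Gamma_b; apply/bigmax_leqP => f Hf.
set h := fun v => nat_of_ord (f v) in Hf *.
have hle : forall v, h v <= 2 by move=> v; rewrite /h -ltnS -[X in _ < X.+1]HD.
case: (boolP [exists v, 1 < h v]) => [/existsP [v Hv] | /existsPn Hall].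
  have H0 : forall w, w != v -> h w = 0.
    move=> w Hwv; apply/eqP; rewrite -leqn0 leqNgt; apply/negP => Hw.
    suff: ~~ minimal_dominating (grid 2 2) h by rewrite Hf.
    apply: (notmin Hw).
    apply/forallP => u; apply/existsP; exists v.
    rewrite /bupd eq_sym (negbTE Hwv) dist_grid.
    have := md_le u v; move: Hv; lia.
  rewrite /bcost (bigD1 v) //= big1 ?addn0 //.
have hle1 : forall v, h v <= 1 by move=> v; move: (Hall v); lia.
have -> : bcost h = \sum_(i < 2) \sum_(j < 2) h (i, j).
  by rewrite /bcost pair_big /=; apply: eq_bigr => -[i j] _.
rewrite !big_ord_recl !big_ord0 /=.
set o0 : 'I_2 := ord0; set o1 : 'I_2 := lift ord0 ord0.
have R : forall p q w : 'I_2 * 'I_2, (p.1 : nat) + q.1 = 1 -> (p.2 : nat) + q.2 = 1 ->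
  ((w.1 : nat) != p.1) || ((w.2 : nat) != p.2) ->
  ((w.1 : nat) != q.1) || ((w.2 : nat) != q.2) ->
  ~ (0 < h p /\ 0 < h q /\ 0 < h w).
  move=> p q w E1 E2 N1 N2 [a [b c]].
  by move: (rm3 E1 E2 a b (neq22 N1) (neq22 N2) c); rewrite Hf.
have C1 := R (o0, o0) (o1, o1) (o0, o1) erefl erefl isT isT.
have C2 := R (o0, o0) (o1, o1) (o1, o0) erefl erefl isT isT.
have C3 := R (o0, o1) (o1, o0) (o0, o0) erefl erefl isT isT.
have C4 := R (o0, o1) (o1, o0) (o1, o1) erefl erefl isT isT.
move: (hle1 (o0, o0)) (hle1 (o0, o1)) (hle1 (o1, o0)) (hle1 (o1, o1)) C1 C2 C3 C4.
lia.
Qed.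

Theorem mainTheorem14 (m n : nat) :
  2 <= m -> m <= n ->
  (diametrical (grid m n) <-> (m = 2 /\ n = 2)).
Proof.
move=> Hm Hmn; rewrite /diametrical.
have Hn : 2 <= n by lia.
have HD := diam_grid (m:=m) (n:=n) (ltnW Hm) (ltnW Hn).
have Hlb := gamma_lb Hm Hn.
split.
- move=> E; rewrite E HD in Hlb; lia.
- move=> [Em En]; subst m n; apply/eqP; rewrite eqn_leq HD gamma_ub22 /=.
  by move: Hlb.
Qed.
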